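(* Let $V$ be a finite nonempty set of voters, $A$ a finite set of alternatives, and $F:\mathcal{P}(V,A)\to S_2(A)$ a consular election rule whose range graph $\mathcal{G}(F)$ satisfies edge-connectivity. Then for every linear order $L$ on $A$ there is a unique favourite committee of $L$ in the range of $F$.
   Context: $S_2(A)$ is the set of 2-element subsets of $A$; a consular election rule maps each profile (a linear order on $A$ for each voter) to an element of $S_2(A)$. The range graph $\mathcal{G}(F)$ has vertex set $A$ and edge set equal to the range of $F$. A graph satisfies edge-connectivity if whenever $\{a,b\}$ and $\{c,d\}$ are edges with $a,b,c,d$ pairwise distinct, then $\{a,c\}$ or $\{a,d\}$ is an edge, and $\{b,c\}$ or $\{b,d\}$ is an edge. For a linear order $L$ on $A$ and $X,Y\in S_2(A)$: $X\succeq^O Y$ iff the $L$-best element of $X$ is weakly $L$-above the $L$-best element of $Y$; $X\succeq^P Y$ iff the $L$-worst element of $X$ is weakly $L$-above the $L$-worst element of $Y$. A favourite committee of $L$ in $\mathcal{X}\subseteq S_2(A)$ is an element of $\mathcal{X}$ maximal in $\mathcal{X}$ under both $\succeq^O$ and $\succeq^P$. *)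

(* Defs.v *)
From mathcomp Require Import all_boot.
Set Implicit Arguments. Unset Strict Implicit. Unset Printing Implicit Defensive.

(* A linear order on A, given by its (weak) relation "x is weakly below y": L x y. *)
Definition is_linorder (A : finType) (L : rel A) : Prop :=
  reflexive L /\ antisymmetric L /\ transitive L /\ total L.

Definition linorder (A : finType) := {L : rel A | is_linorder L}.

Definition profile (V A : finType) := V -> linorder A.

Definition is_pair (A : finType) (X : {set A}) : Prop := #|X| = 2.

Definition in_range (V A : finType) (F : profile V A -> {set A}) (X : {set A}) : Prop :=
  exists P, F P = X.

Definition edge_connected (A : finType) (E : {set A} -> Prop) : Prop :=
  forall a b c d : A, uniq [:: a; b; c; d] ->
    E [set a; b] -> E [set c; d] ->
    (E [set a; c] \/ E [set a; d]) /\ (E [set b; c] \/ E [set b; d]).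

Definition is_best (A : finType) (L : rel A) (X : {set A}) (x : A) : Prop :=
  x \in X /\ forall y, y \in X -> L y x.
Definition is_worst (A : finType) (L : rel A) (X : {set A}) (x : A) : Prop :=
  x \in X /\ forall y, y \in X -> L x y.

Definition succeqO (A : finType) (L : rel A) (X Y : {set A}) : Prop :=
  exists x y, is_best L X x /\ is_best L Y y /\ L y x.
Definition succeqP (A : finType) (L : rel A) (X Y : {set A}) : Prop :=
  exists x y, is_worst L X x /\ is_worst L Y y /\ L y x.

Definition maximal_in (A : finType) (R : {set A} -> {set A} -> Prop)
    (Xs : {set A} -> Prop) (X : {set A}) : Prop :=
  Xs X /\ forall Y, Xs Y -> R Y X -> R X Y.

Definition favourite_committee (A : finType) (L : rel A)
    (Xs : {set A} -> Prop) (X : {set A}) : Prop :=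
  maximal_in (succeqO L) Xs X /\ maximal_in (succeqP L) Xs X.

(* Main.v *)
Require Import Defs.
From mathcomp Require Import all_boot.
From mathcomp Require Import zify.
From Stdlib Require Import Classical.
Set Implicit Arguments. Unset Strict Implicit.

Lemma ex_max (T : finType) (P : T -> Prop) (f : T -> nat) :
  (exists x, P x) -> exists x, P x /\ forall y, P y -> f y <= f x.
Proof.
move=> [x0 P0].
set M := \max_(x : T) f x.
have hM : forall x, f x <= M by move=> x; apply: leq_bigmax.
suff H : forall n x, P x -> M - f x <= n -> exists x, P x /\ forall y, P y -> f y <= f x.
  by apply: (H (M - f x0) x0).
elim=> [|n IH] x Px hn.
- exists x; split=> // y Py; have := hM y; lia.
- destruct (classic (exists y, P y /\ f x < f y)) as [[y [Py lt]]|nex].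
  + apply: (IH y Py); have := hM y; lia.
  + exists x; split=> // y Py; rewrite leqNgt; apply/negP=> h; apply: nex; eauto.
Qed.

Section Lin.
Variables (A : finType) (L : rel A).
Hypothesis HL : is_linorder L.

Definition rk (a : A) := #|[set b | L b a]|.

Lemma rk_le a b : L a b -> rk a <= rk b.
Proof.
case: HL => _ [_ [tr _]] lab; apply: subset_leq_card; apply/subsetP=> c.
rewrite !inE => lca; exact: tr lca lab.
Qed.

Lemma rk_lt a b : L a b -> a != b -> rk a < rk b.
Proof.
case: HL => rf [an [tr _]] lab nab; apply: proper_card; apply/properP; split.
  apply/subsetP=> c; rewrite !inE => lca; exact: tr lca lab.
exists b; rewrite !inE ?rf //; apply/negP=> lba; move/negP: nab; apply.
by apply/eqP; apply: an; rewrite lab lba.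
Qed.

Lemma rk_L a b : rk a <= rk b -> L a b.
Proof.
case: HL => rf [an [tr to]] h; case/orP: (to a b) => // lba.
case: (eqVneq b a) => [->|nba]; first exact: rf.
have := @rk_lt b a lba nba; lia.
Qed.

Lemma L_anti a b : L a b -> L b a -> a = b.
Proof. by case: HL => _ [an _] h1 h2; apply: an; rewrite h1 h2. Qed.

Lemma pairP (X : {set A}) : #|X| = 2 -> exists x y, x != y /\ L y x /\ X = [set x; y].
Proof.
case: HL => _ [_ [_ to]] /eqP /cards2P [x [y [nxy ->]]].
case/orP: (to x y) => h.
  by exists y, x; rewrite eq_sym setUC.
by exists x, y.
Qed.

Lemma best2 x y : L y x -> is_best L [set x; y] x.
Proof.
case: HL => rf _ h; split; first by rewrite !inE eqxx.
by move=> z; rewrite !inE => /orP [] /eqP ->.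
Qed.

Lemma worst2 x y : L y x -> is_worst L [set x; y] y.
Proof.
case: HL => rf _ h; split; first by rewrite !inE eqxx orbT.
by move=> z; rewrite !inE => /orP [] /eqP ->.
Qed.

Lemma best_uniq X x x' : is_best L X x -> is_best L X x' -> x = x'.
Proof. by move=> [h1 h2] [h3 h4]; apply: L_anti; [apply: h4|apply: h2]. Qed.

Lemma worst_uniq X x x' : is_worst L X x -> is_worst L X x' -> x = x'.
Proof. by move=> [h1 h2] [h3 h4]; apply: L_anti; [apply: h2|apply: h4]. Qed.

End Lin.

Theorem proposition34 (V A : finType) (F : profile V A -> {set A}) :
  0 < #|V| ->
  (forall P, is_pair (F P)) ->
  edge_connected (in_range F) ->
  forall L : rel A, is_linorder L ->
    exists! X : {set A}, favourite_committee L (in_range F) X.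
Proof.
move=> _ Hpair Hec L HL.
pose Lr := fun x y : A => enum_rank x <= enum_rank y.
have HLr : is_linorder Lr.
  split; first by move=> x; exact: leqnn.
  split; first by move=> x y h; apply: enum_rank_inj; apply: val_inj; exact: anti_leq.
  split; first by move=> y x z; exact: leq_trans.
  by move=> x y; exact: leq_total.
pose P0 : profile V A := fun _ => exist _ Lr HLr.
have rangeP : forall X, in_range F X -> exists x y, x != y /\ L y x /\ X = [set x; y].
  by move=> X [P <-]; apply: pairP => //; apply: Hpair.
pose Pp := fun p : A * A => in_range F [set p.1; p.2] /\ p.1 != p.2 /\ L p.2 p.1.
have ex0 : exists p, Pp p.
  have [x [y [nxy [lyx e]]]] := rangeP (F P0) (ex_intro _ P0 erefl).
  by exists (x, y); rewrite /Pp /= -e; split=> //; exists P0.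
have [[b x] [[Eb [nbx lxb]] Mb]] := ex_max (fun p => rk L p.1) ex0.
have [[u w] [[Ew [nuw lwu]] Mw]] := ex_max (fun p => rk L p.2) ex0.
simpl in *.
have allb : forall X, in_range F X -> exists y1 y2, y1 != y2 /\ L y2 y1 /\ X = [set y1; y2]
    /\ L y1 b /\ L y2 w.
  move=> X RX; have [y1 [y2 [n12 [l21 e]]]] := rangeP X RX.
  exists y1, y2; do 3 split => //; subst X.
  split; apply: rk_L => //.
    exact: (Mb (y1, y2)).
  exact: (Mw (y1, y2)).
have ltwu : rk L w < rk L u by apply: rk_lt => //; rewrite eq_sym.
have lub : rk L u <= rk L b by apply: (Mb (u, w)).
have nbw : b != w by apply/eqP=> e; subst; lia.
have lwb : L w b by apply: rk_L => //; lia.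
have claim : in_range F [set b; w].
  case: (eqVneq x w) => [exw|nxw]; first by rewrite -exw.
  case: (eqVneq u b) => [eub|nub]; first by rewrite -eub.
  have lxw : rk L x <= rk L w by apply: (Mw (b, x)).
  have nxu : x != u by apply/eqP=> e; subst; lia.
  have nbu : b != u by rewrite eq_sym.
  have U : uniq [:: b; x; u; w].
    by rewrite /= !inE !negb_or nbx nbu nbw nxu nxw nuw.
  have [[H|H] _] := Hec b x u w U Eb Ew => //.
  have := Mw (b, u) (conj H (conj nbu _)).
  have lub' : L u b by apply: rk_L => //.
  move=> /(_ lub') /=; lia.
exists [set b; w]; split.
  split; split=> // Y RY _; have [y1 [y2 [_ [l21 [-> [l1 l2]]]]]] := allb Y RY.
    by exists b, y1; split; [apply: best2|split; [apply: best2|]].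
  by exists w, y2; split; [apply: worst2|split; [apply: worst2|]].
move=> X' [[RX' MO] [_ MP]].
have [p [q [npq [lqp [e [lpb lqw]]]]]] := allb X' RX'.
have hO : succeqO L [set b; w] X'.
  by exists b, p; rewrite e; split; [apply: best2|split; [apply: best2|]].
have hP : succeqP L [set b; w] X'.
  by exists w, q; rewrite e; split; [apply: worst2|split; [apply: worst2|]].
have [x1 [y1 [b1 [b2 l1]]]] := MO _ claim hO.
have [x2 [y2 [w1 [w2 l2]]]] := MP _ claim hP.
rewrite e in b1 w1.
have ex1 := best_uniq HL b1 (best2 HL lqp).
have ey1 := best_uniq HL b2 (best2 HL lwb).
have ex2 := worst_uniq HL w1 (worst2 HL lqp).
have ey2 := worst_uniq HL w2 (worst2 HL lwb).
subst.
by rewrite (L_anti HL lpb l1) (L_anti HL lqw l2).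
Qed.
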